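(* Let $A,B,X$ be finite-dimensional real inner product spaces and $\alpha:A\to X$, $\beta:B\to X$ Riemannian submersions. Then there exists an inner product on the fiber product $C=A\times_{\alpha,\beta}B=\{(a,b)\in A\times B:\alpha(a)=\beta(b)\}$ such that both projections $\pi_A:C\to A$ and $\pi_B:C\to B$ are Riemannian submersions.
   Context: A linear surjection $T:E\to F$ between finite-dimensional inner product spaces is a Riemannian submersion if its restriction to $(\ker T)^\perp$ is an isometry onto $F$. *)

(* Defs.v *)
From HB Require Import structures.
From mathcomp Require Import all_boot all_order all_algebra.
Set Implicit Arguments. Unset Strict Implicit. Unset Printing Implicit Defensive.
Import Order.TTheory GRing.Theory Num.Theory.
Local Open Scope ring_scope.

Definition is_inner_product (R : realFieldType) (V : lmodType R)
  (ip : V -> V -> R) : Prop :=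
  [/\ forall (a : R) (u v w : V), ip (a *: u + v) w = a * ip u w + ip v w,
      forall u v : V, ip u v = ip v u
    & forall u : V, u != 0 -> 0 < ip u u].

Definition in_ker_perp (R : realFieldType) (U V : lmodType R)
  (ipU : U -> U -> R) (T : U -> V) (u : U) : Prop :=
  forall k : U, T k = 0 -> ipU u k = 0.

Definition riemannian_submersion (R : realFieldType) (U V : lmodType R)
  (ipU : U -> U -> R) (ipV : V -> V -> R) (T : U -> V) : Prop :=
  [/\ linear T,
      forall y : V, exists x : U, T x = y,
      forall u v : U, in_ker_perp ipU T u -> in_ker_perp ipU T v ->
        ipV (T u) (T v) = ipU u v
    & forall y : V, exists2 u : U, in_ker_perp ipU T u & T u = y].

Definition fiber_space (R : fieldType) (A B X : vectType R)
  (alpha : {linear A -> X}) (beta : {linear B -> X}) : {vspace (A * B)%type} :=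
  lker (linfun (fun p : A * B => alpha p.1 - beta p.2)).

Definition fiber_prod (R : fieldType) (A B X : vectType R)
  (alpha : {linear A -> X}) (beta : {linear B -> X}) : vectType R :=
  subvs_of (fiber_space alpha beta).

Arguments fiber_space [R A B X] alpha beta.
Arguments fiber_prod [R A B X] alpha beta.

Definition proj_A (R : fieldType) (A B X : vectType R)
  (alpha : {linear A -> X}) (beta : {linear B -> X}) :
  fiber_prod alpha beta -> A := fun c => (vsval c).1.

Definition proj_B (R : fieldType) (A B X : vectType R)
  (alpha : {linear A -> X}) (beta : {linear B -> X}) :
  fiber_prod alpha beta -> B := fun c => (vsval c).2.

Arguments proj_A [R A B X] alpha beta _.
Arguments proj_B [R A B X] alpha beta _.

(* Main.v *)
Require Import Defs.
From HB Require Import structures.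
From mathcomp Require Import all_boot all_order all_algebra ring.
Import Order.TTheory GRing.Theory Num.Theory.
Local Open Scope ring_scope.
Set Implicit Arguments. Unset Strict Implicit.

Definition fibf (R : fieldType) (A B X : vectType R)
  (alpha : {linear A -> X}) (beta : {linear B -> X}) : (A * B)%type -> X :=
  fun p => alpha p.1 - beta p.2.
Lemma fibf_lin (R : fieldType) (A B X : vectType R)
  (alpha : {linear A -> X}) (beta : {linear B -> X}) : linear (fibf alpha beta).
Proof. by move=> k u v; rewrite /fibf /= [alpha _]linearP [beta _]linearP scalerBr opprD addrACA -scalerN. Qed.
HB.instance Definition _ (R : fieldType) (A B X : vectType R)
  (alpha : {linear A -> X}) (beta : {linear B -> X}) :=
  GRing.isLinear.Build R (A * B)%type X *:%R (fibf alpha beta) (fibf_lin alpha beta).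
Lemma fibfE (R : fieldType) (A B X : vectType R)
  (alpha : {linear A -> X}) (beta : {linear B -> X}) p :
  linfun (fun p : A * B => alpha p.1 - beta p.2) p = alpha p.1 - beta p.2.
Proof. change (linfun (fibf alpha beta) p = fibf alpha beta p). by rewrite lfunE. Qed.

Section Helpers.
Variable R : realFieldType.

Lemma ipD (V : lmodType R) (ip : V -> V -> R) :
  (forall (a : R) (u v w : V), ip (a *: u + v) w = a * ip u w + ip v w) ->
  forall u v w, ip (u + v) w = ip u w + ip v w.
Proof. by move=> H u v w; rewrite -[u]scale1r H mul1r scale1r. Qed.

Lemma ip0l (V : lmodType R) (ip : V -> V -> R) :
  (forall (a : R) (u v w : V), ip (a *: u + v) w = a * ip u w + ip v w) ->
  forall w, ip 0 w = 0.
Proof.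
move=> H w; have := ipD H 0 0 w; rewrite addr0 => /eqP.
by rewrite -subr_eq0 opprD addrA subrr sub0r oppr_eq0 => /eqP.
Qed.

Lemma ip0r (V : lmodType R) (ip : V -> V -> R) :
  is_inner_product ip -> forall w, ip w 0 = 0.
Proof. by case=> H S _ w; rewrite S (ip0l H). Qed.

Lemma ip_ge0 (V : lmodType R) (ip : V -> V -> R) :
  is_inner_product ip -> forall u, 0 <= ip u u.
Proof.
move=> hip u; have [->|nz] := eqVneq u 0; first by rewrite (ip0r hip).
by case: hip => _ _ P; apply: ltW; apply: P.
Qed.

Lemma ip_sub_ge0 (A X : lmodType R) ipA ipX (alpha : A -> X) :
  is_inner_product ipA -> riemannian_submersion ipA ipX alpha ->
  forall a, ipX (alpha a) (alpha a) <= ipA a a.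
Proof.
move=> hA [lin _ iso lift] a.
have [u pu eu] := lift (alpha a).
have hal : forall x y, alpha (x - y) = alpha x - alpha y.
  move=> x y; have := lin (-1) y x; rewrite !scaleN1r.
  by rewrite [- y + x]addrC [- _ + alpha x]addrC.
have ak : alpha (a - u) = 0 by rewrite hal eu subrr.
have D := ipD (let: And3 H _ _ := hA in H).
have S : forall x y, ipA x y = ipA y x by case: hA.
have E : ipA a a = ipA (a - u) (a - u) + ipA u u.
  move: ak; set k := a - u => ak.
  have ea : a = k + u by rewrite /k subrK.
  clearbody k; rewrite ea.
  rewrite D (S k (k + u)) (S u (k + u)) !D (S k u) (pu _ ak) addr0 add0r.
  by [].
rewrite E.
rewrite -eu (iso u u pu pu).
by rewrite lerDr ip_ge0.
Qed.

Lemma sub_general (C A B X : lmodType R) ipC ipA ipB ipX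
  (p : C -> A) (q : C -> B) (alpha : A -> X) (beta : B -> X) :
  linear p -> is_inner_product ipA -> is_inner_product ipB ->
  is_inner_product ipX -> alpha 0 = 0 ->
  riemannian_submersion ipB ipX beta ->
  (forall c, alpha (p c) = beta (q c)) ->
  (forall a b, alpha a = beta b -> exists c, p c = a /\ q c = b) ->
  (forall c d, ipC c d = ipA (p c) (p d) + ipB (q c) (q d)
                          - ipX (alpha (p c)) (alpha (p d))) ->
  riemannian_submersion ipC ipA p.
Proof.
move=> lp hA hB hX a0 [lb sb isob liftb] comm mk ipCE.
have p0 : p 0 = 0.
  have := lp 1 0 0; rewrite scaler0 addr0 scale1r => /eqP.
  by rewrite -subr_eq0 opprD addrA subrr sub0r oppr_eq0 => /eqP.
split=> //.
- move=> a; have [b eb] := sb (alpha a).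
  by have [c [pc _]] := mk a b (esym eb); exists c.
- move=> u v pu pv.
  have qperp : forall w, in_ker_perp ipC p w -> in_ker_perp ipB beta (q w).
    move=> w pw k bk.
    have [c [pc qc]] := mk 0 k ltac:(by rewrite a0 bk).
    have := pw c pc; rewrite ipCE pc qc a0 (ip0r hA) (ip0r hX) add0r subr0.
    by [].
  rewrite ipCE -(isob _ _ (qperp _ pu) (qperp _ pv)) -!comm.
  by rewrite addrK.
- move=> a; have [b pb eb] := liftb (alpha a).
  have [c [pc qc]] := mk a b (esym eb).
  exists c => // k pk.
  have bk : beta (q k) = 0 by rewrite -comm pk a0.
  by rewrite ipCE pk a0 (ip0r hA) (ip0r hX) add0r subr0 qc (pb _ bk).
Qed.

End Helpers.

Theorem lemma2p6 (R : realFieldType) (A B X : vectType R)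
  (ipA : A -> A -> R) (ipB : B -> B -> R) (ipX : X -> X -> R)
  (hipA : is_inner_product ipA) (hipB : is_inner_product ipB)
  (hipX : is_inner_product ipX)
  (alpha : {linear A -> X}) (beta : {linear B -> X})
  (halpha : riemannian_submersion ipA ipX alpha)
  (hbeta : riemannian_submersion ipB ipX beta) :
  exists ipC : fiber_prod alpha beta -> fiber_prod alpha beta -> R,
    [/\ is_inner_product ipC,
        riemannian_submersion ipC ipA (proj_A alpha beta)
      & riemannian_submersion ipC ipB (proj_B alpha beta)].
Proof.
pose ipC := fun c d : fiber_prod alpha beta =>
  ipA (vsval c).1 (vsval d).1 + ipB (vsval c).2 (vsval d).2
  - ipX (alpha (vsval c).1) (alpha (vsval d).1).
have comm : forall c : fiber_prod alpha beta,
    alpha (proj_A alpha beta c) = beta (proj_B alpha beta c).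
  move=> c; have := subvsP c; rewrite /fiber_space memv_ker fibfE /=.
  by rewrite subr_eq0 => /eqP.
have mk : forall a b, alpha a = beta b ->
    exists c, proj_A alpha beta c = a /\ proj_B alpha beta c = b.
  move=> a b e.
  have mem : (a, b) \in fiber_space alpha beta.
    by rewrite /fiber_space memv_ker fibfE /= e subrr.
  exists (vsproj (fiber_space alpha beta) (a, b)).
  by rewrite /proj_A /proj_B vsprojK.
have lA : linear (proj_A alpha beta).
  by move=> k u v; rewrite /proj_A linearP.
have lB : linear (proj_B alpha beta).
  by move=> k u v; rewrite /proj_B linearP.
exists ipC; split.
- case: (hipA) => LA SA _; case: (hipB) => LB SB _; case: (hipX) => LX SX _.
  split.
  + move=> k u v w; rewrite /ipC linearP /= LA LB linearP LX; ring.
  + by move=> u v; rewrite /ipC SA SB SX.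
  + move=> u nz; rewrite /ipC.
    have e := comm u; rewrite /proj_A /proj_B in e.
    have hv : vsval u != 0.
      apply: contraNneq nz => h; apply/eqP; apply: (@subvs_inj _ _ (fiber_space alpha beta)).
      by rewrite h raddf0.
    move: hv e; case: (vsval u) => a b /= hv e.
    rewrite e.
    have [b0|bnz] := eqVneq b 0.
      subst b; rewrite linear0 (ip0r hipX) subr0 (ip0r hipB) addr0.
      have anz : a != 0 by apply: contraNneq hv => ->.
      by case: hipA => _ _ P; apply: P.
    rewrite -e -addrA addrC -addrA.
    have h1 := ip_sub_ge0 hipA halpha a.
    have h2 : 0 < ipB b b by case: hipB => _ _ P; apply: P.
    by rewrite ltr_wpDr // addrC subr_ge0.
- apply: (@sub_general R _ A B X ipC ipA ipB ipX (proj_A alpha beta)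
    (proj_B alpha beta) alpha beta lA hipA hipB hipX (raddf0 alpha) hbeta comm mk).
  by [].
- apply: (@sub_general R _ B A X ipC ipB ipA ipX (proj_B alpha beta)
    (proj_A alpha beta) beta alpha lB hipB hipA hipX (raddf0 beta) halpha).
  + by move=> c; rewrite comm.
  + by move=> b a e; have [c [h1 h2]] := mk a b (esym e); exists c.
  + move=> c d; rewrite /ipC -!comm /proj_A /proj_B; congr (_ - _); exact: addrC.
Qed.
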